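(* For all integers $n\ge 1$, $$s_3(n)=\tfrac{4}{3}n^3-3n^2+\tfrac{8}{3}n-1,\qquad d_3(n)=\tfrac{2}{3}n^4-\tfrac{4}{3}n^3+\tfrac{11}{6}n^2-\tfrac{13}{6}n+1.$$
   Context: For $n\ge 1$, the $2\times n$ board consists of $2n$ unit squares arranged in 2 rows and $n$ columns; two squares are adjacent iff they share an edge. A piece is a nonempty set of squares that is connected under adjacency. A division of the board into $k$ pieces is a partition of the set of all $2n$ squares into exactly $k$ pieces. $d_k(n)$ denotes the number of divisions of the $2\times n$ board into $k$ pieces. $s_k(n)$ denotes the number of such divisions in which the two squares of the rightmost column lie in different pieces. *)

(* Defs.v *)
From mathcomp Require Import all_boot all_order all_algebra.
Set Implicit Arguments. Unset Strict Implicit. Unset Printing Implicit Defensive.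

Definition square (n : nat) := ('I_2 * 'I_n)%type.

Definition adj (n : nat) : rel (square n) := fun x y =>
  ((x.1 == y.1) && ((x.2.+1 == y.2 :> nat) || (y.2.+1 == x.2 :> nat)))
  || ((x.2 == y.2) && (x.1 != y.1)).

Definition connected_set (n : nat) (A : {set square n}) : bool :=
  [forall x in A, forall y in A,
     connect [rel u v | adj u v && (u \in A) && (v \in A)] x y].

Definition piece (n : nat) (A : {set square n}) : bool :=
  (A != set0) && connected_set A.

Definition division (n k : nat) (P : {set {set square n}}) : bool :=
  [&& partition P [set: square n], [forall A in P, piece A] & #|P| == k].

Arguments division : clear implicits.

Definition d (k n : nat) : nat := #|[set P | division n k P]|.

(* Rightmost column is column n-1; its two squares lie in different pieces. *)
Definition right_split (n : nat) (P : {set {set square n}}) : bool :=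
  match n as m return {set {set square m}} -> bool with
  | 0 => fun _ => false
  | m.+1 => fun P => pblock P (ord0, ord_max) != pblock P (1%R, ord_max)
  end P.
Arguments right_split : clear implicits.

Definition s (k n : nat) : nat :=
  #|[set P | division n k P & right_split n P]|.

(* Main.v *)
Require Import Defs.
From mathcomp Require Import all_boot all_order all_algebra.
From mathcomp Require Import zify ring lra.
Set Implicit Arguments. Unset Strict Implicit. Unset Printing Implicit Defensive.

Section Gen.
Variable T : finType.

Lemma connect_inv (e : rel T) (a : pred T) :
  (forall x y, e x y -> a x -> a y) -> forall x y, connect e x y -> a x -> a y.
Proof.
move=> H x y /connectP [p ep ->]; elim: p x ep => //= z p IH x /andP[exz pz] ax.
exact: IH pz (H _ _ exz ax).
Qed.

Lemma connect_homo (T' : finType) (e : rel T) (e' : rel T') (a : pred T) (f : T -> T') :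
  (forall x y, e x y -> a x -> a y) ->
  (forall x y, e x y -> a x -> f x = f y \/ e' (f x) (f y)) ->
  forall x y, connect e x y -> a x -> connect e' (f x) (f y).
Proof.
move=> Ha Hf x y /connectP [p ep ->]; elim: p x ep => //= z p IH x /andP[exz pz] ax.
apply: connect_trans (IH _ pz (Ha _ _ exz ax)).
by case: (Hf _ _ exz ax) => [->|h]; [exact: connect0 | exact: connect1].
Qed.

Lemma eq_preim (K1 K2 : eqType) (f : T -> K1) (g : T -> K2) D :
  (forall x y, (f x == f y) = (g x == g y)) -> preim_partition f D = preim_partition g D.
Proof.
move=> H; rewrite /preim_partition /equivalence_partition; apply: eq_imset => x.
by apply/setP => y; rewrite !inE H.
Qed.

Lemma pblock_preim (K : eqType) (f : T -> K) x y :
  (y \in pblock (preim_partition f [set: T]) x) = (f x == f y).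
Proof. by rewrite pblock_equivalence_partition ?inE //; split=> // /eqP ->. Qed.

Lemma eq_preim_pblock (K : eqType) (f : T -> K) x y :
  (pblock (preim_partition f [set: T]) x == pblock (preim_partition f [set: T]) y)
   = (f x == f y).
Proof.
have [/eqP cov ti _] := and3P (preim_partitionP f [set: T]).
by rewrite eq_pblock // ?cov ?inE // pblock_preim.
Qed.

Lemma eqblock (P : {set {set T}}) x y : partition P [set: T] ->
  (pblock P x == pblock P y) = (y \in pblock P x).
Proof. by case/and3P => /eqP cov ti _; rewrite eq_pblock // cov inE. Qed.

Lemma card_ppart (K : finType) (f : T -> K) :
  #|preim_partition f [set: T]| = #|f @: [set: T]|.
Proof.
rewrite /preim_partition /equivalence_partition.
have -> : [set [set y in [set: T] | f x == f y] | x in [set: T]] =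
          (fun l => [set y | l == f y]) @: (f @: [set: T]).
  by rewrite -imset_comp; apply: eq_imset => x; apply/setP => y; rewrite !inE.
apply: card_in_imset => _ _ /imsetP[x _ ->] /imsetP[y _ ->] /setP /(_ x).
by rewrite !inE eqxx => /esym /eqP ->.
Qed.

Lemma pblock_imset (P : {set {set T}}) : partition P [set: T] ->
  pblock P @: [set: T] = P.
Proof.
move=> pP; have [/eqP cov ti n0] := and3P pP.
apply/setP => B; apply/imsetP/idP => [[x _ ->]|BP].
  by apply: pblock_mem; rewrite cov inE.
have /set0Pn [x xB] : B != set0 by apply: partition_neq0 pP BP.
by exists x => //; rewrite (def_pblock ti BP xB).
Qed.

Lemma card_pair (A B : finType) (F : A -> B -> bool) :
  #|[set p : A * B | F p.1 p.2]| = \sum_(b : B) #|[set a | F a b]|.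
Proof.
rewrite -sum1dep_card big_mkcond /=.
rewrite -(pair_bigA _ (fun a b => if F a b then 1 else 0)) exchange_big /=.

apply: eq_bigr => b _.
by rewrite -sum1dep_card [RHS]big_mkcond.
Qed.
End Gen.

Definition cr n (A : {set square n}) := [rel u v : square n | adj u v && (u \in A) && (v \in A)].

Lemma crE n (A : {set square n}) x y : cr A x y = adj x y && (x \in A) && (y \in A).
Proof. by []. Qed.

Lemma crI n (A : {set square n}) x y : adj x y -> x \in A -> y \in A -> cr A x y.
Proof. by move=> h1 h2 h3; rewrite /cr /= h1 h2 h3. Qed.

Lemma adjC n (x y : square n) : adj x y = adj y x.
Proof.
rewrite /adj; congr (_ || _); first by rewrite eq_sym orbC.
by rewrite eq_sym (eq_sym x.1).
Qed.

Lemma crC n (A : {set square n}) : symmetric (cr A).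
Proof. by move=> x y; rewrite /= adjC -!andbA; congr (_ && _); rewrite andbC. Qed.

Lemma cr_sym n (A : {set square n}) x y : connect (cr A) x y = connect (cr A) y x.
Proof. by rewrite (sym_connect_sym (@crC n A)). Qed.

Definition r1 : 'I_2 := 1%R.
Lemma r1E : val r1 = 1. Proof. by []. Qed.
Lemma I2P (r : 'I_2) : r = ord0 \/ r = r1.
Proof. case: r => [[|[|k]]] //= H; [left|right]; exact: val_inj. Qed.
Definition oth (r : 'I_2) : 'I_2 := if r == ord0 then r1 else ord0.

Lemma inlE (K : eqType) (a b : K) : (inl a == inl b :> K + bool) = (a == b). Proof. by []. Qed.
Lemma inlrE (K : eqType) (a : K) c : (inl a == inr c :> K + bool) = false. Proof. by []. Qed.
Lemma inrlE (K : eqType) (a : K) c : (inr c == inl a :> K + bool) = false. Proof. by []. Qed.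
Lemma inrE (K : eqType) c d : (inr c == inr d :> K + bool) = (c == d). Proof. by []. Qed.

Lemma cardU2 (T : finType) (X : {set T}) a b :
  #|X :|: [set a; b]| = #|X| + ((a != b) && (a \notin X)) + (b \notin X).
Proof.
rewrite setUC -!setUA cardsU1 cardsU1 in_setU1 negb_or.
case: (a != b); case: (a \in X); case: (b \in X) => /=; lia.
Qed.

Section Board.
Variable m : nat.
Local Notation sqo := (square m.+1).
Local Notation sqn := (square m.+2).

Definition emb (x : sqo) : sqn := (x.1, widen_ord (leqnSn _) x.2).
Definition down (x : sqn) : sqo := (x.1, inord x.2).
Definition isnew (x : sqn) := x.2 == ord_max.
Definition osq (r : 'I_2) : sqo := (r, ord_max).
Definition nsq (r : 'I_2) : sqn := (r, ord_max).

Lemma embK x : down (emb x) = x.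
Proof. by case: x => a c; rewrite /down /emb /= inord_val. Qed.

Lemma emb_inj : injective emb.
Proof. by move=> x y h; rewrite -(embK x) h embK. Qed.

Lemma isnew_emb x : isnew (emb x) = false.
Proof. by case: x => a [c hc]; rewrite /isnew -val_eqE /= ltn_eqF. Qed.

Lemma isnew_nsq r : isnew (nsq r). Proof. exact: eqxx. Qed.

Lemma downK x : ~~ isnew x -> emb (down x) = x.
Proof.
case: x => a [c hc]; rewrite /isnew -val_eqE /= => hne.
have hc' : c < m.+1 by rewrite ltnNge; apply: contra hne => h; rewrite eqn_leq h -ltnS hc.
by congr (_, _); apply: val_inj; rewrite /= inordK.
Qed.

Lemma isnewP x : isnew x -> x = nsq x.1.
Proof. by case: x => a c /eqP /= ->. Qed.

Lemma newP x : {z | x = emb z} + {r | x = nsq r}.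
Proof.
case h: (isnew x); last by left; exists (down x); rewrite downK ?h.
by right; exists x.1; apply: isnewP.
Qed.

Lemma adj_emb x y : adj (emb x) (emb y) = adj x y. Proof. by []. Qed.

Lemma adj_en x r : adj (emb x) (nsq r) = (x == osq r).
Proof.
case: x => a [c hc]; rewrite /adj /osq xpair_eqE /= -!val_eqE /=.
have e1 : (m.+2 == c) = false by apply/eqP => h; move: hc; rewrite -h ltnNge leqnSn.
have e2 : (c == m.+1) = false by apply/eqP => h; move: hc; rewrite h ltnn.
by rewrite e1 e2 eqSS orbF /= orbF.
Qed.

Lemma adj_nn r r' : adj (nsq r) (nsq r') = (r != r').
Proof. by rewrite /adj /= eqxx /= !eqn_leq !ltnn /= andbF. Qed.

Lemma adj_oo r r' : adj (osq r) (osq r') = (r != r').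
Proof. by rewrite /adj /= eqxx /= !eqn_leq !ltnn /= andbF. Qed.

Lemma oth_neq r : r != oth r.
Proof. by case: (I2P r) => ->. Qed.
Lemma neq_oth r r' : r != r' -> r' = oth r.
Proof. by case: (I2P r) => ->; case: (I2P r') => ->. Qed.
Lemma othK r : oth (oth r) = r.
Proof. by case: (I2P r) => ->. Qed.


Definition lab (K : eqType) (g : sqo -> K) (c : bool * bool * bool) (x : sqn) : (K + bool)%type :=
  let: (ht, hb, v) := c in
  if isnew x then
    if x.1 == ord0 then
      (if ht then inl (g (osq ord0)) else if v && hb then inl (g (osq r1)) else inr false)
    else (if hb then inl (g (osq r1)) else if v && ht then inl (g (osq ord0)) else inr (~~ v))
  else inl (g (down x)).

Lemma lab_emb (K : eqType) (g : sqo -> K) c z : lab g c (emb z) = inl (g z).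
Proof. by case: c => [[ht hb] v]; rewrite /lab isnew_emb embK. Qed.

Lemma lab_n0 (K : eqType) (g : sqo -> K) ht hb v : lab g (ht, hb, v) (nsq ord0) =
  (if ht then inl (g (osq ord0)) else if v && hb then inl (g (osq r1)) else inr false).
Proof. by rewrite /lab isnew_nsq eqxx. Qed.

Lemma lab_n1 (K : eqType) (g : sqo -> K) ht hb v : lab g (ht, hb, v) (nsq r1) =
  (if hb then inl (g (osq r1)) else if v && ht then inl (g (osq ord0)) else inr (~~ v)).
Proof. by rewrite /lab isnew_nsq. Qed.

Lemma lab_anchor (K : eqType) (g : sqo -> K) c r k : lab g c (nsq r) = inl k ->
  (lab g c (nsq r) == inl (g (osq r))) ||
  ((lab g c (nsq r) == lab g c (nsq (oth r))) && (lab g c (nsq r) == inl (g (osq (oth r))))).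
Proof.
case: c => [[ht hb] v]; case: (I2P r) => ->; rewrite ?lab_n0 ?lab_n1 /oth /=.
 all: case: ht; case: hb; case: v => h //=; rewrite ?inlE ?eqxx ?orbT //.

Qed.

Lemma lab_eqrel (K K' : eqType) (g : sqo -> K) (g' : sqo -> K') c x y :
  (forall z w, (g z == g w) = (g' z == g' w)) ->
  (lab g c x == lab g c y) = (lab g' c x == lab g' c y).
Proof.
move=> H; case: c => [[ht hb] v].
case: (newP x) => [[z ->]|[r ->]]; case: (newP y) => [[w ->]|[r' ->]];
  rewrite ?lab_emb ?inlE ?H //;
  try case: (I2P r) => ->; try case: (I2P r') => ->;
  rewrite ?lab_n0 ?lab_n1;
  by case: ht; case: hb; case: v; rewrite /= ?inlE ?H.
Qed.

Definition valid (same : bool) (c : bool * bool * bool) :=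
  let: (ht, hb, v) := c in
  if same then [&& (ht && hb) ==> v, (ht && v) ==> hb & (hb && v) ==> ht]
  else ~~ [&& ht, hb & v].

Lemma lab_bits (K : eqType) (g : sqo -> K) c : valid (g (osq ord0) == g (osq r1)) c ->
  (lab g c (nsq ord0) == lab g c (emb (osq ord0)),
   lab g c (nsq r1) == lab g c (emb (osq r1)),
   lab g c (nsq ord0) == lab g c (nsq r1)) = c.
Proof.
case: c => [[ht hb] v]; rewrite !lab_emb lab_n0 lab_n1.
case e: (g (osq ord0) == g (osq r1)); have e' := e; rewrite eq_sym in e';
by case: ht; case: hb; case: v; rewrite /= ?inlE ?e ?e' ?eqxx.
Qed.


Definition bitsp (K : eqType) (p : sqn -> K) : bool * bool * bool :=
  (p (nsq ord0) == p (emb (osq ord0)), p (nsq r1) == p (emb (osq r1)),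
   p (nsq ord0) == p (nsq r1)).

Definition anchored (K : eqType) (p : sqn -> K) :=
  forall z r, p (nsq r) == p (emb z) ->
   (p (nsq r) == p (emb (osq r))) ||
   ((p (nsq r) == p (nsq (oth r))) && (p (nsq (oth r)) == p (emb (osq (oth r))))).

Lemma lab_p_no (K : eqType) (p : sqn -> K) : anchored p -> forall r z,
  (p (nsq r) == p (emb z)) =
  (lab (p \o emb) (bitsp p) (nsq r) == lab (p \o emb) (bitsp p) (emb z)).
Proof.
move=> Hc r z; rewrite lab_emb /bitsp.
have Hz := Hc z r.
case: (I2P r) Hz => -> Hz; rewrite ?lab_n0 ?lab_n1 /comp.
{ case: (p (nsq ord0) =P p (emb (osq ord0))) => [e1|ne1]; first by rewrite inlE e1.
  case: (p (nsq ord0) =P p (nsq r1)) => [e2|ne2] /=;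
  case: (p (nsq r1) =P p (emb (osq r1))) => [e3|ne3] /=;
   try by rewrite inlE e2 e3.
  all: apply/eqP => h; move: (Hz (introT eqP h)); rewrite /oth /=.
  all: by case/orP => [/eqP|/andP[/eqP ? /eqP ?]]; auto. }
{ case: (p (nsq r1) =P p (emb (osq r1))) => [e1|ne1]; first by rewrite inlE e1.
  case: (p (nsq ord0) =P p (nsq r1)) => [e2|ne2] /=;
  case: (p (nsq ord0) =P p (emb (osq ord0))) => [e3|ne3] /=;
   try by rewrite inlE -e2 e3.
  all: apply/eqP => h; move: (Hz (introT eqP h)); rewrite /oth /=.
  all: by case/orP => [/eqP|/andP[/eqP ? /eqP ?]]; auto. }
Qed.

Lemma lab_p_nn (K : eqType) (p : sqn -> K) :
  (p (nsq ord0) == p (nsq r1)) =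
  (lab (p \o emb) (bitsp p) (nsq ord0) == lab (p \o emb) (bitsp p) (nsq r1)).
Proof.
rewrite /bitsp lab_n0 lab_n1 /=.
case: (p (nsq ord0) =P p (emb (osq ord0))) => [e1|ne1];
case: (p (nsq r1) =P p (emb (osq r1))) => [e2|ne2];
case: (p (nsq ord0) =P p (nsq r1)) => [e3|ne3] //=; rewrite ?inlE ?eqxx //.
  by rewrite -e1 -e2 e3 eqxx.
by apply/esym/eqP => h; apply: ne3; rewrite e1 e2 h.
Qed.

Lemma lab_p (K : eqType) (p : sqn -> K) : anchored p -> forall x y,
  (p x == p y) = (lab (p \o emb) (bitsp p) x == lab (p \o emb) (bitsp p) y).
Proof.
move=> Hc x y.
case: (newP x) => [[z ->]|[r ->]]; case: (newP y) => [[w ->]|[r' ->]].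
- by rewrite !lab_emb inlE.
- by rewrite eq_sym lab_p_no // eq_sym.
- by rewrite lab_p_no.
case: (I2P r) => ->; case: (I2P r') => ->; rewrite ?eqxx //.
  exact: lab_p_nn.
by rewrite eq_sym lab_p_nn eq_sym.
Qed.


Definition delta (c : bool * bool * bool) : nat :=
  let: (ht, hb, v) := c in
  (~~ ht && ~~ (v && hb)) + (~~ hb && ~~ (v && ht)) - [&& ~~ ht, ~~ hb & v].

Lemma setT_split : [set: sqn] = emb @: [set: sqo] :|: [set nsq ord0; nsq r1].
Proof.
apply/setP => x; rewrite !inE; case: (newP x) => [[z ->]|[r ->]].
  by rewrite imset_f.
by case: (I2P r) => ->; rewrite ?inE eqxx ?orbT.
Qed.

Lemma card_lab (K : finType) (g : sqo -> K) c :
  #|lab g c @: [set: sqn]| = #|g @: [set: sqo]| + delta c.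
Proof.
rewrite setT_split imsetU -imset_comp (eq_imset _ (@lab_emb K g c)) imset_comp.
rewrite imsetU1 imset_set1 cardU2 card_imset; last by move=> a b [].
have mem_inl z : inl (g z) \in inl @: (g @: [set: sqo]) by rewrite !imset_f.
have mem_inr d : (inr d : K + bool) \in inl @: (g @: [set: sqo]) = false.
  by apply/imsetP => [[?]].
case: c => [[ht hb] v]; rewrite lab_n0 lab_n1.
case: ht; case: hb; case: v; rewrite /= ?mem_inl ?mem_inr /= ?andbF ?addn0 //; lia.
Qed.

End Board.

Lemma connP n (A : {set square n}) :
  reflect (forall x y, x \in A -> y \in A -> connect (cr A) x y) (connected_set A).
Proof.
apply: (iffP forall_inP) => [H x y xA yA|H x xA]; first by move/forall_inP: (H x xA); apply.
by apply/forall_inP => y yA; apply: H.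
Qed.

Section Conn.
Variable m : nat.
Local Notation sqo := (square m.+1).
Local Notation sqn := (square m.+2).

Definition anc (B : {set sqn}) (u : sqn) :=
  ~~ isnew u || (emb (osq m u.1) \in B) ||
  ((nsq m (oth u.1) \in B) && (emb (osq m (oth u.1)) \in B)).

Lemma anc_step (B : {set sqn}) u v : cr B u v -> anc B u -> anc B v.
Proof.
move=> /andP[/andP[huv uB] vB].
case: (newP v) huv vB => [[w ->]|[r ->]] huv vB; first by rewrite /anc isnew_emb.
case: (newP u) huv uB => [[z ->]|[r' ->]] huv uB.
  by move=> _; move: huv; rewrite adj_en => /eqP ez; subst z; rewrite /anc /= uB orbT.
move: huv vB; rewrite adj_nn => /neq_oth -> vB; rewrite /anc /= !isnew_nsq /= othK.
by case/orP => [h|/andP[_ ->]]; rewrite ?orbT // uB h ?orbT.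
Qed.

Lemma anc_conn (B : {set sqn}) x u : connect (cr B) (emb x) u -> anc B u.
Proof.
move=> h; apply: (connect_inv (@anc_step B) h).
by rewrite /anc isnew_emb.
Qed.

Definition proj (B : {set sqn}) (u : sqn) : sqo :=
  if isnew u then (if emb (osq m u.1) \in B then osq m u.1 else osq m (oth u.1))
  else down u.

Lemma projA (B : {set sqn}) u : u \in B -> anc B u -> emb (proj B u) \in B.
Proof.
case: (newP u) => [[z ->]|[r ->]] uB; first by rewrite /proj isnew_emb embK.
rewrite /anc /proj isnew_nsq /=; case: ifP => //= _ /andP[_ h]; exact: h.
Qed.

Lemma proj_emb (B : {set sqn}) z : proj B (emb z) = z.
Proof. by rewrite /proj isnew_emb embK. Qed.

Lemma osq_or (a b : 'I_2) : osq m a = osq m b \/ adj (osq m a) (osq m b).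
Proof. by rewrite adj_oo; case: eqP => [->|_]; [left|right]. Qed.

Lemma restr_conn (B : {set sqn}) :
  connected_set B -> connected_set [set z : sqo | emb z \in B].
Proof.
move/connP => HB; apply/connP => x y; rewrite !inE => xB yB.
have := @connect_homo _ _ (cr B) (cr [set z : sqo | emb z \in B]) (anc B) (proj B)
  (@anc_step B) _ (emb x) (emb y) (HB _ _ xB yB).
rewrite !proj_emb; apply; last by rewrite /anc isnew_emb.
move=> u v huv au; have av := anc_step huv au.
case/andP: huv => /andP [huv uB] vB.
have pu := projA uB au; have pv := projA vB av.
suff : proj B u = proj B v \/ adj (proj B u) (proj B v).
  by case=> [->|h]; [left|right; rewrite /= !inE h pu pv].
case: (newP u) huv uB au pu => [[z ->]|[r ->]] huv uB au pu;
case: (newP v) huv vB av pv => [[w ->]|[r' ->]] huv vB av pv.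
- by right; rewrite !proj_emb.
- move: huv; rewrite adj_en => /eqP ez; subst z; left.
  by rewrite /proj isnew_emb isnew_nsq embK /= uB.
- move: huv; rewrite adjC adj_en => /eqP ew; subst w; left.
  by rewrite /proj isnew_emb isnew_nsq embK /= vB.
rewrite /proj !isnew_nsq /=; case: ifP => _; case: ifP => _; exact: osq_or.
Qed.

Definition DV n (P : {set {set square n}}) :=
  partition P [set: square n] && [forall A in P, piece A].

Lemma ext_conn (Q : {set {set sqo}}) c x : DV Q ->
  connected_set [set y in [set: sqn] | lab (pblock Q) c x == lab (pblock Q) c y].
Proof.
case/andP => pQ /forall_inP HQ.
have [/eqP covQ tiQ _] := and3P pQ.
set l := lab (pblock Q) c x.
set A := [set y in [set: sqn] | l == lab (pblock Q) c y].
have inA y : (y \in A) = (l == lab (pblock Q) c y) by rewrite !inE.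
have HO z w : emb z \in A -> emb w \in A -> connect (cr A) (emb z) (emb w).
  rewrite !inA !lab_emb => /eqP lz /eqP lw.
  have ezw : pblock Q w = pblock Q z by move: lw; rewrite lz => -[].
  have KQ : pblock Q z \in Q by apply: pblock_mem; rewrite covQ inE.
  have /andP [_ /connP HK] := HQ _ KQ.
  have zK : z \in pblock Q z by rewrite mem_pblock covQ inE.
  have wK : w \in pblock Q z by rewrite -ezw mem_pblock covQ inE.
  have := @connect_homo _ _ (cr (pblock Q z)) (cr A) predT (@emb m) _ _ z w (HK _ _ zK wK) isT.
  apply => // u v /andP[/andP[huv uK] vK] _; right.
  apply: crI; rewrite ?adj_emb // !inA !lab_emb lz;
  by rewrite ?(def_pblock tiQ KQ uK) ?(def_pblock tiQ KQ vK) eqxx.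
have HN r z : nsq m r \in A -> emb z \in A ->
    exists w, emb w \in A /\ connect (cr A) (nsq m r) (emb w).
  move=> hr hz; move: (hr) (hz); rewrite !inA lab_emb => /eqP lr /eqP lz.
  have := @lab_anchor m _ (pblock Q) c r (pblock Q z).
  rewrite -lr -lz => /(_ erefl) /orP [h|/andP[h1 h2]].
    exists (osq m r); split; first by rewrite inA lab_emb.
    apply: connect1; apply: crI => //; first by rewrite adjC adj_en eqxx.
    by rewrite inA lab_emb.
  have ho : nsq m (oth r) \in A by rewrite inA.
  have he : emb (osq m (oth r)) \in A by rewrite inA lab_emb.
  exists (osq m (oth r)); split => //.
  apply: (@connect_trans _ _ (nsq m (oth r))); apply: connect1.
    by apply: crI; rewrite ?adj_nn ?oth_neq.
  by apply: crI => //; rewrite adjC adj_en eqxx.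
apply/connP => y1 y2 h1 h2.
case: (newP y1) h1 => [[z ->]|[r ->]] h1; case: (newP y2) h2 => [[w ->]|[r' ->]] h2.
- exact: HO.
- have [w' [hw' c']] := HN r' z h2 h1.
  by rewrite cr_sym; apply: connect_trans c' (HO _ _ hw' h1).
- have [w' [hw' c']] := HN r w h1 h2.
  exact: connect_trans c' (HO _ _ hw' h2).
case: (r =P r') => [<-|ne]; first exact: connect0.
by apply: connect1; apply: crI; rewrite ?adj_nn //; apply/eqP.
Qed.

End Conn.

Section Corr.
Variable m : nat.
Local Notation sqo := (square m.+1).
Local Notation sqn := (square m.+2).

Definition Rst (P : {set {set sqn}}) : {set {set sqo}} :=
  preim_partition (fun z => pblock P (emb z)) [set: sqo].
Definition Ext (Q : {set {set sqo}}) c : {set {set sqn}} :=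
  preim_partition (lab (pblock Q) c) [set: sqn].
Definition sameo (Q : {set {set sqo}}) := pblock Q (osq m ord0) == pblock Q (osq m r1).

Lemma DV_Rst P : DV P -> DV (Rst P).
Proof.
case/andP => pP /forall_inP HP; apply/andP; split; first exact: preim_partitionP.
apply/forall_inP => A /imsetP [x _ ->].
have [/eqP covP tiP _] := and3P pP.
have -> : [set y in [set: sqo] | pblock P (emb x) == pblock P (emb y)] =
          [set y | emb y \in pblock P (emb x)].
  by apply/setP => y; rewrite !inE eqblock.
have BP : pblock P (emb x) \in P by apply: pblock_mem; rewrite covP inE.
case/andP: (HP _ BP) => _ hc; apply/andP; split; last exact: restr_conn.
by apply/set0Pn; exists x; rewrite inE mem_pblock covP inE.
Qed.

Lemma DV_Ext Q c : DV Q -> DV (Ext Q c).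
Proof.
move=> hQ; apply/andP; split; first exact: preim_partitionP.
apply/forall_inP => A /imsetP [x _ ->]; apply/andP; split; last exact: ext_conn.
by apply/set0Pn; exists x; rewrite !inE eqxx.
Qed.

Lemma Rst_Ext Q c : DV Q -> Rst (Ext Q c) = Q.
Proof.
case/andP => pQ _; rewrite /Rst -[RHS](preim_partition_pblock pQ).
by apply: eq_preim => z w; rewrite /Ext eq_preim_pblock !lab_emb inlE.
Qed.

Lemma bits_Ext Q c : valid (sameo Q) c -> bitsp (m:=m) (pblock (Ext Q c)) = c.
Proof. by move=> hv; rewrite /bitsp /Ext !eq_preim_pblock; apply: lab_bits. Qed.

Lemma anchored_P P : DV P -> anchored (m:=m) (pblock P).
Proof.
case/andP => pP /forall_inP HP z r h.
have [/eqP covP tiP _] := and3P pP.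
set B := pblock P (nsq m r).
have BP : B \in P by apply: pblock_mem; rewrite covP inE.
case/andP: (HP _ BP) => _ /connP hc.
have zB : emb z \in B by rewrite -eqblock.
have uB : nsq m r \in B by rewrite mem_pblock covP inE.
have := anc_conn (hc _ _ zB uB); rewrite /anc isnew_nsq /=.
case/orP => [h1|/andP[h1 h2]]; first by rewrite /B eqblock // h1.
apply/orP; right; rewrite /B (same_pblock tiP h1) eqxx /=.
by rewrite eqblock.
Qed.

Lemma Ext_Rst P : DV P -> Ext (Rst P) (bitsp (m:=m) (pblock P)) = P.
Proof.
move=> hP; have pP : partition P [set: sqn] by case/andP: hP.
rewrite -[RHS](preim_partition_pblock pP) /Ext.
apply: eq_preim => x y; rewrite (@lab_p _ _ (pblock P) (anchored_P hP)).
by apply: lab_eqrel => z w; rewrite /Rst eq_preim_pblock.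
Qed.

Lemma valid_bits P : DV P -> valid (sameo (Rst P)) (bitsp (m:=m) (pblock P)).
Proof.
move=> hP; rewrite /sameo /Rst eq_preim_pblock /bitsp /valid.
set a := pblock P (emb (osq m ord0)); set b := pblock P (emb (osq m r1)).
set t := pblock P (nsq m ord0); set u := pblock P (nsq m r1).
case: (a =P b) => [eab|nab]; case: (t =P a) => [e1|n1]; case: (u =P b) => [e2|n2];
  case: (t =P u) => [e3|n3] //=.
all: exfalso; congruence.
Qed.

Lemma card_Ext Q c : DV Q -> #|Ext Q c| = #|Q| + delta c.
Proof.
case/andP => pQ _; rewrite /Ext (card_ppart (lab (pblock Q) c)) card_lab pblock_imset //.
Qed.

Lemma rs_n P : right_split m.+2 P = ~~ (bitsp (m:=m) (pblock P)).2.
Proof. by []. Qed.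

Lemma rs_o Q : right_split m.+1 Q = ~~ sameo Q.
Proof. by []. Qed.

End Corr.

Definition cnt n k (b : bool) :=
  #|[set P : {set {set square n}} | DV P && (#|P| == k) && (right_split n P == b)]|.

Definition term m k (b : bool) (c : bool * bool * bool) :=
  #|[set Q : {set {set square m.+1}} |
     DV Q && valid (sameo Q) c && (#|Q| + delta c == k) && (~~ c.2 == b)]|.

Lemma fiber m k b : cnt m.+2 k b = \sum_(c : bool * bool * bool) term m k b c.
Proof.
rewrite /term -(card_pair (fun (Q : {set {set square m.+1}}) c =>
   DV Q && valid (sameo Q) c && (#|Q| + delta c == k) && (~~ c.2 == b))).
set S := [set p | _].
rewrite -(@card_in_imset _ _ (fun p => Ext p.1 p.2) S); last first.
  move=> [q1 c1] [q2 c2]; rewrite !inE /=.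
  move=> /andP[/andP[/andP[h1 v1] _] _] /andP[/andP[/andP[h2 v2] _] _] e.
  have eq : q1 = q2 by rewrite -(Rst_Ext c1 h1) e Rst_Ext.
  subst q2; congr pair; by rewrite -(bits_Ext v1) e bits_Ext.
rewrite /cnt; apply: eq_card => P; rewrite inE.
apply/idP/imsetP => [/andP[/andP[hP /eqP hk] /eqP hs]|[[Q c] hS ->]].
  exists (Rst P, bitsp (m:=m) (pblock P)); last by rewrite /= Ext_Rst.
  rewrite inE; change (DV (Rst P) && valid (sameo (Rst P)) (bitsp (m:=m) (pblock P)) &&
    (#|Rst P| + delta (bitsp (m:=m) (pblock P)) == k) && (~~ (bitsp (m:=m) (pblock P)).2 == b)).
  rewrite DV_Rst // valid_bits // -card_Ext ?DV_Rst // Ext_Rst // hk eqxx.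
  by rewrite -hs rs_n eqxx.
move: hS; rewrite inE => hS.
change (is_true (DV Q && valid (sameo Q) c && (#|Q| + delta c == k) && (~~ c.2 == b))) in hS.
case/andP: hS => /andP[/andP[hQ hv] hk] hs.
change (DV (Ext Q c) && (#|Ext Q c| == k) && (right_split m.+2 (Ext Q c) == b)).
by rewrite DV_Ext // card_Ext // hk rs_n bits_Ext.
Qed.

Lemma card_sum (T : finType) (p : pred T) : #|[set x | p x]| = \sum_x (p x : nat).
Proof. by rewrite -sum1dep_card big_mkcond; apply: eq_bigr => x _; case: (p x). Qed.

Lemma term_val m k b c : term m k b c =
  if (~~ c.2 == b) && (delta c <= k) then
    valid true c * cnt m.+1 (k - delta c) false + valid false c * cnt m.+1 (k - delta c) true
  else 0.
Proof.
rewrite /term /cnt !card_sum.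
case h: ((~~ c.2 == b) && (delta c <= k)).
  case/andP: h => hb hd.
  under eq_bigr => Q _.
    have e : (#|Q| + delta c == k) = (#|Q| == k - delta c) by apply/eqP/eqP; lia.
    rewrite hb andbT e.
    have -> : (DV Q && valid (sameo Q) c && (#|Q| == k - delta c) : nat) =
      valid true c * (DV Q && (#|Q| == k - delta c) && (right_split m.+1 Q == false)) +
      valid false c * (DV Q && (#|Q| == k - delta c) && (right_split m.+1 Q == true)).
      rewrite rs_o; by case: (sameo Q); case: (valid true c); case: (valid false c); case: (DV Q);
         case: (#|Q| == k - delta c).
    over.
  by rewrite big_split /= -!big_distrr.
apply: big1 => Q _.
move: h; case: (~~ c.2 == b); rewrite ?andbF //= => hd.
have -> : (#|Q| + delta c == k) = false by apply/eqP; lia.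
by rewrite andbF.
Qed.

Lemma sum_bool3 (F : bool * bool * bool -> nat) : \sum_c F c =
  F (true, true, true) + F (true, true, false) + (F (true, false, true) + F (true, false, false)) +
  (F (false, true, true) + F (false, true, false) + (F (false, false, true) + F (false, false, false))).
Proof.
have e1 : \sum_c F c = \sum_(p : bool * bool) \sum_(v : bool) F (p, v).
  by rewrite (pair_bigA _ (fun p v => F (p, v))); apply: eq_bigr => -[].
have e2 : \sum_(p : bool * bool) \sum_(v : bool) F (p, v) =
          \sum_(a : bool) \sum_(b : bool) \sum_(v : bool) F (a, b, v).
  by rewrite (pair_bigA _ (fun a b => \sum_(v : bool) F (a, b, v))); apply: eq_bigr => -[].
by rewrite e1 e2 !big_bool.
Qed.

Lemma rec_s m k : 2 <= k -> cnt m.+2 k true =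
  cnt m.+1 (k - 2) false + cnt m.+1 (k - 2) true +
  2 * (cnt m.+1 (k - 1) false + cnt m.+1 (k - 1) true) + cnt m.+1 k true.
Proof.
move=> hk; rewrite fiber sum_bool3 !term_val /=.
rewrite ?subn0 ?addn0 ?add0n ?subn0 (_ : 1 + 1 = 2) // hk (ltnW hk) ?mul1n ?mul0n.
lia.
Qed.

Lemma rec_a m k : 1 <= k -> cnt m.+2 k false =
  cnt m.+1 (k - 1) false + cnt m.+1 (k - 1) true + 2 * cnt m.+1 k true + cnt m.+1 k false.
Proof.
move=> hk; rewrite fiber sum_bool3 !term_val /=.
rewrite ?subn0 ?addn0 ?add0n ?subn0 (_ : 1 + 1 - 1 = 1) // hk ?mul1n; lia.
Qed.

Lemma rec_s1 m : cnt m.+2 1 true =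
  2 * (cnt m.+1 0 false + cnt m.+1 0 true) + cnt m.+1 1 true.
Proof.
rewrite fiber sum_bool3 !term_val /=.
rewrite ?subn0 ?addn0 ?add0n ?mul1n subnn; lia.
Qed.

Lemma cnt0 n b : cnt n.+1 0 b = 0.
Proof.
apply/eqP; rewrite cards_eq0; apply/eqP/setP => P; rewrite !inE.
apply/negbTE; apply/negP => /andP[/andP[/andP[pP _] /eqP]].
move/eqP; rewrite cards_eq0 => /eqP P0; subst P.
case/and3P: pP => /eqP cov _ _.
have : ((ord0, ord0) : square n.+1) \in cover set0 by rewrite cov inE.
by rewrite /cover big_set0 inE.
Qed.

Lemma s_cnt k n : s k n = cnt n k true.
Proof.
rewrite /s /cnt; apply: eq_card => P; rewrite !inE /division /DV.
by rewrite -!andbA eqb_id.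
Qed.

Lemma d_cnt k n : d k n = cnt n k true + cnt n k false.
Proof.
rewrite /d /cnt !card_sum -big_split /=; apply: eq_bigr => P _.
rewrite /division /DV -!andbA.
case: (right_split n P); case: (cover P == _); case: (trivIset P); case: (set0 \in P);
  case: [forall A in P, piece A]; by case: (#|P| == k).
Qed.

Definition t1 : square 1 := (ord0, ord_max).
Definition b1 : square 1 := (r1, ord_max).

Lemma sq1 (x : square 1) : x = t1 \/ x = b1.
Proof.
case: x => r c; have -> : c = ord_max by apply: val_inj; case: c => [[|]].
by case: (I2P r) => ->; [left|right].
Qed.

Lemma adj_tb : adj t1 b1. Proof. by []. Qed.

Lemma DV_preim1 (K : eqType) (f : square 1 -> K) :
  (forall x y, f x = f y -> x = y \/ adj x y) -> DV (preim_partition f [set: square 1]).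
Proof.
move=> H; apply/andP; split; first exact: preim_partitionP.
apply/forall_inP => A /imsetP [x _ ->]; apply/andP; split.
  by apply/set0Pn; exists x; rewrite !inE eqxx.
apply/connP => y z; rewrite !inE => /eqP hy /eqP hz.
have hyz : f y = f z by rewrite -hy -hz.
case: (H y z hyz) => [->|h]; first exact: connect0.
by apply: connect1; apply: crI; rewrite ?inE -?hy -?hz ?eqxx.
Qed.

Definition P1 := preim_partition (fun _ : square 1 => tt) [set: square 1].
Definition P2 := preim_partition (fun x : square 1 => x) [set: square 1].

Lemma DV_P1 : DV P1.
Proof.
apply: DV_preim1 => x y _.
case: (sq1 x) => ->; case: (sq1 y) => ->; try by left.
  by right; exact: adj_tb.
by right; rewrite adjC; exact: adj_tb.
Qed.

Lemma DV_P2 : DV P2.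
Proof. by apply: DV_preim1 => x y ->; left. Qed.

Lemma rs1 P : right_split 1 P = ~~ (pblock P t1 == pblock P b1).
Proof. by []. Qed.

Lemma card_P1 : #|P1| = 1.
Proof.
rewrite /P1 (card_ppart (fun _ : square 1 => tt)).
have -> : [set tt | _ in [set: square 1]] = [set tt].
  by apply/setP => u; case: u; rewrite !inE eqxx; apply/imsetP; exists t1.
exact: cards1.
Qed.

Lemma card_P2 : #|P2| = 2.
Proof.
rewrite /P2 (card_ppart (fun x : square 1 => x)) imset_id cardsT card_prod !card_ord.
by [].
Qed.

Lemma classify P : DV P -> P = if right_split 1 P then P2 else P1.
Proof.
case/andP => pP _; rewrite rs1.
rewrite -{1}(preim_partition_pblock pP).
case: eqP => [e|ne] /=; apply: eq_preim => x y.
  by case: (sq1 x) => ->; case: (sq1 y) => ->; rewrite ?e ?eqxx.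
have tb : (t1 == b1) = false by [].
have bt : (b1 == t1) = false by [].
case: (sq1 x) => ->; case: (sq1 y) => ->; rewrite ?eqxx ?tb ?bt //.
  by apply/eqP.
by apply/eqP => h; apply: ne.
Qed.

Lemma cnt1f k : cnt 1 k false = (k == 1).
Proof.
rewrite /cnt (@eq_card _ _ [pred P | (P == P1) && (k == 1)]); last first.
  move=> P; rewrite !inE; apply/idP/idP.
    case/andP => /andP [hP hk] /eqP hs.
    have e := classify hP; rewrite hs in e; subst P.
    by rewrite eqxx -(eqP hk) card_P1.
  case/andP => /eqP -> /eqP ->.
  by rewrite DV_P1 card_P1 eqxx rs1 /P1 eq_preim_pblock.
case: (k == 1).
  by rewrite (@eq_card _ _ (pred1 P1)) ?card1 // => P; rewrite !inE ?andbT.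
by rewrite (@eq_card _ _ pred0) ?card0 // => P; rewrite !inE ?andbF.
Qed.

Lemma cnt1t k : cnt 1 k true = (k == 2).
Proof.
rewrite /cnt (@eq_card _ _ [pred P | (P == P2) && (k == 2)]); last first.
  move=> P; rewrite !inE; apply/idP/idP.
    case/andP => /andP [hP hk] /eqP hs.
    have e := classify hP; rewrite hs in e; subst P.
    by rewrite eqxx -(eqP hk) card_P2.
  case/andP => /eqP -> /eqP ->.
  by rewrite DV_P2 card_P2 eqxx rs1 /P2 eq_preim_pblock.
case: (k == 2).
  by rewrite (@eq_card _ _ (pred1 P2)) ?card1 // => P; rewrite !inE ?andbT.
by rewrite (@eq_card _ _ pred0) ?card0 // => P; rewrite !inE ?andbF.
Qed.

Import GRing.Theory Num.Theory.
Local Open Scope ring_scope.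

Definition fS3 (x : rat) := 4%:R / 3%:R * x ^+ 3 - 3%:R * x ^+ 2 + 8%:R / 3%:R * x - 1.
Definition fD3 (x : rat) := 2%:R / 3%:R * x ^+ 4 - 4%:R / 3%:R * x ^+ 3
                 + 11%:R / 6%:R * x ^+ 2 - 13%:R / 6%:R * x + 1.

Lemma closed m : let x := (m.+1)%:R : rat in
  [/\ (cnt m.+1 1 false)%:R = 1 :> rat, (cnt m.+1 1 true)%:R = 0 :> rat &
      (cnt m.+1 2 true)%:R = 2%:R * x - 1] /\
  [/\ (cnt m.+1 2 false)%:R = (x - 1) * (2%:R * x - 1),
      (cnt m.+1 3 true)%:R = fS3 x & (cnt m.+1 3 false)%:R = fD3 x - fS3 x].
Proof.
elim: m => [|m IH] x.
  rewrite /x !cnt1f !cnt1t /fS3 /fD3 /=.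
  by split; split; field.
case: IH => -[h1 h2 h3] [h4 h5 h6].
have ex : x = (m.+1)%:R + 1 by rewrite /x natr1.
rewrite (rec_a _ (isT : (0 < 1)%N)) (rec_s1 m) (rec_s _ (isT : (1 < 2)%N)).
rewrite (rec_a _ (isT : (0 < 2)%N)) (rec_s _ (isT : (1 < 3)%N)) (rec_a _ (isT : (0 < 3)%N)).
rewrite !cnt0 /= ?natrD ?natrM h1 h2 h3 h4 h5 h6 ex /fS3 /fD3.
by split; split; field.
Qed.

Unset Implicit Arguments.

Theorem mainTheorem4 (n : nat) (hn : (1 <= n)%N) :
  (s 3 n)%:R = 4%:R / 3%:R * (n%:R : rat) ^+ 3 - 3%:R * n%:R ^+ 2
                 + 8%:R / 3%:R * n%:R - 1
  /\
  (d 3 n)%:R = 2%:R / 3%:R * (n%:R : rat) ^+ 4 - 4%:R / 3%:R * n%:R ^+ 3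
                 + 11%:R / 6%:R * n%:R ^+ 2 - 13%:R / 6%:R * n%:R + 1.
Proof.
case: n hn => // m _.
have [_ [_ h5 h6]] := closed m.
rewrite s_cnt d_cnt natrD h5 h6; split; first by [].
by rewrite /fS3 /fD3 addrC subrK.
Qed.
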